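(* Let $N\in\mathbb N$, $\beta\ge0$, and let $\boldsymbol c^{(1)},\boldsymbol c^{(2)}$ be $N\times N$ matrices with nonnegative entries. Then $$\big|p_N(\beta,\boldsymbol c^{(2)})-p_N(\beta,\boldsymbol c^{(1)})\big|\le\frac{\beta}{2N^2}\sum_{i,j=1}^N|c^{(2)}_{ij}-c^{(1)}_{ij}|.$$ In particular, for numbers $c_1,c_2\ge0$, $|p_N(\beta,c_2)-p_N(\beta,c_1)|\le\frac12\beta|c_2-c_1|$.
   Context: Fix an integer $q\ge2$, $[q]=\{1,\dots,q\}$. For $\sigma\in[q]^N$ and a real $N\times N$ matrix $J$, $H_N(\sigma,J)=\sum_{i,j=1}^N J_{ij}\delta(\sigma_i,\sigma_j)$ and $Z_N(J)=\sum_{\sigma\in[q]^N}e^{-H_N(\sigma,J)}$. For a matrix $\boldsymbol c=(c_{ij})$ with nonnegative entries, $\mathbb E_{N,\boldsymbol c}$ is expectation over a random matrix $J$ with independent entries $J_{ij}\sim$ Poisson with mean $c_{ij}/(2N)$, and $p_N(\beta,\boldsymbol c)=\mathbb E_{N,\boldsymbol c}[N^{-1}\ln Z_N(\beta J)]$. For a number $c\ge0$, $p_N(\beta,c)$ means $p_N(\beta,\boldsymbol c)$ with $c_{ij}=c$ for all $i,j$. *)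

(* Defs.v *)
From HB Require Import structures.
From mathcomp Require Import all_boot all_order all_algebra.
From mathcomp Require Import all_classical all_reals.
From mathcomp Require Import all_analysis.
Import numFieldNormedType.Exports.
Set Implicit Arguments. Unset Strict Implicit. Unset Printing Implicit Defensive.
Import Order.TTheory GRing.Theory Num.Theory.
Local Open Scope ring_scope.

(* Poisson pmf with mean lam >= 0 (including lam = 0: point mass at 0). *)
Definition poisson {R : realType} (lam : R) (k : nat) : R :=
  expR (- lam) * lam ^+ k / (k`!)%:R.

(* H_N(sigma, J) = sum_{i,j} J_ij delta(sigma_i, sigma_j); spins take values
   in 'I_q (a relabelling of [q] = {1,..,q}). *)
Definition Ham {R : realType} (q N : nat) (sigma : {ffun 'I_N -> 'I_q})
  (J : 'M[R]_N) : R :=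
  \sum_(i < N) \sum_(j < N) J i j * (sigma i == sigma j)%:R.

Definition Zpart {R : realType} (q N : nat) (J : 'M[R]_N) : R :=
  \sum_(sigma : {ffun 'I_N -> 'I_q}) expR (- Ham sigma J).

Definition natmx {R : realType} (N : nat) (J : 'I_N * 'I_N -> nat) : 'M[R]_N :=
  \matrix_(i, j) (J (i, j))%:R.

Definition truncE {R : realType} (N : nat) (c : 'M[R]_N)
  (f : 'M[R]_N -> R) (K : nat) : R :=
  \sum_(J : {ffun 'I_N * 'I_N -> 'I_K})
     (\prod_(ij : 'I_N * 'I_N) poisson (c ij.1 ij.2 / (2 * N)%:R) (J ij))
     * f (natmx (fun ij => nat_of_ord (J ij))).

(* E_{N,c}[f(J)] for independent J_ij ~ Poisson(c_ij/(2N)): the (absolutely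
   convergent, for the f used here) series over nat^(N x N), as the limit of
   its truncations. *)
Definition EPois {R : realType} (N : nat) (c : 'M[R]_N) (f : 'M[R]_N -> R) : R :=
  limn (truncE c f).

Definition pN {R : realType} (q N : nat) (beta : R) (c : 'M[R]_N) : R :=
  EPois c (fun J => N%:R^-1 * ln (Zpart q (beta *: J))).

(* Main.v *)
Require Import Defs.
From HB Require Import structures.
From mathcomp Require Import all_boot all_order all_algebra.
From mathcomp Require Import all_classical all_reals.
From mathcomp Require Import all_analysis.
From mathcomp Require Import ring lra.
Import numFieldNormedType.Exports.
Import Order.TTheory GRing.Theory Num.Theory.
Local Open Scope ring_scope.


Section Pois.
Variable R : realType.
Implicit Types lam del : R.

Lemma poisson_ge0 lam k : 0 <= lam -> 0 <= poisson lam k.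
Proof.
move=> h; rewrite /poisson; apply: divr_ge0; last exact: ler0n.
by rewrite mulr_ge0 ?expR_ge0 ?exprn_ge0.
Qed.

Lemma psumE lam K : \sum_(k < K) poisson lam k = expR (- lam) * series (exp_coeff lam) K.
Proof.
rewrite /series /= big_mkord mulr_sumr; apply: eq_bigr => k _.
by rewrite /poisson /exp_coeff /= mulrA.
Qed.

Lemma series_le_expR lam K : 0 <= lam -> series (exp_coeff lam) K <= expR lam.
Proof.
move=> h; apply: (nondecreasing_cvgn_le _ (is_cvg_series_exp_coeff lam)).
apply/nondecreasing_seqP => n; rewrite /series /= big_nat_recr //= lerDl.
exact: exp_coeff_ge0.
Qed.

Lemma psum_le1 lam K : 0 <= lam -> \sum_(k < K) poisson lam k <= 1.
Proof.
move=> h; rewrite psumE; apply: (@le_trans _ _ (expR (- lam) * expR lam)).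
  by rewrite ler_wpM2l ?expR_ge0 ?series_le_expR.
by rewrite -expRD addNr expR0.
Qed.

Lemma psum_ge0 lam K : 0 <= lam -> 0 <= \sum_(k < K) poisson lam k.
Proof. by move=> h; apply: sumr_ge0 => k _; exact: poisson_ge0. Qed.

Lemma psum_cvg lam : ((fun K => \sum_(k < K) poisson lam k) @ \oo --> (1 : R))%classic.
Proof.
rewrite (_ : (fun K => _) = (fun K => expR (- lam) * series (exp_coeff lam) K)); last first.
  by apply/funext => K; rewrite psumE.
rewrite (_ : 1 = expR (- lam) * expR lam); last by rewrite -expRD addNr expR0.
apply: cvgMl_tmp; exact: (is_cvg_series_exp_coeff lam).
Qed.

Lemma pmean lam K : 0 <= lam -> \sum_(k < K) k%:R * poisson lam k <= lam.
Proof.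
move=> h; case: K => [|K]; first by rewrite big_ord0.
rewrite big_ord_recl /= mul0r add0r.
rewrite (eq_bigr (fun i : 'I_K => lam * poisson lam i)); last first.
  move=> i _; rewrite /bump /= /poisson factS natrM exprS.
  have h1 : (i`!)%:R != 0 :> R by rewrite pnatr_eq0 -lt0n fact_gt0.
  have h2 : (i.+1)%:R != 0 :> R by rewrite pnatr_eq0.
  move: h1 h2; move: (i`!%:R) (i.+1%:R) (lam ^+ i) (expR (- lam)) => A B x u hA hB.
by field; rewrite hA hB.
have -> : \sum_(i < K) lam * poisson lam i = lam * \sum_(i < K) poisson lam i by rewrite mulr_sumr.
rewrite -[X in _ <= X]mulr1 ler_wpM2l //; exact: psum_le1.
Qed.

Lemma pconv lam del n :
  poisson (lam + del) n = \sum_(a < n.+1) poisson lam a * poisson del (n - a).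
Proof.
rewrite /poisson opprD expRD addrC exprDn mulr_sumr mulr_suml.
apply: eq_bigr => i _.
have hi : (i <= n)%N by rewrite -ltnS.
have hb := bin_fact hi.
have E : (n`!)%:R = ('C(n, i))%:R * ((i`!)%:R * ((n - i)`!)%:R) :> R.
  by rewrite -!natrM hb.
have h1 : (i`!)%:R != 0 :> R by rewrite pnatr_eq0 -lt0n fact_gt0.
have h2 : ((n - i)`!)%:R != 0 :> R by rewrite pnatr_eq0 -lt0n fact_gt0.
have h3 : ('C(n, i))%:R != 0 :> R by rewrite pnatr_eq0 -lt0n bin_gt0.
rewrite E -mulr_natr.
move: h1 h2 h3; move: (i`!%:R) ((n - i)`!%:R) ('C(n, i)%:R) (lam ^+ i) (del ^+ (n - i)) (expR (- lam)) (expR (- del)) => A B C x y u v hA hB hC.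
by field; rewrite hC hA hB.
Qed.

Lemma pconvK lam del n K : (n < K)%N ->
  poisson (lam + del) n = \sum_(a < K) \sum_(b < K)
     (poisson lam a * poisson del b * ((a + b == n)%N)%:R).
Proof.
move=> hn; rewrite pconv (big_ord_widen K (fun a => poisson lam a * poisson del (n - a)) hn).
rewrite big_mkcond; apply: eq_bigr => a _.
case: (ltnP a n.+1) => ha.
  have hb : (n - a < K)%N by apply: leq_ltn_trans (leq_subr a n) hn.
  rewrite (bigD1 (Ordinal hb)) //= big1 ?addr0.
    have ha' : (a <= n)%N by rewrite -ltnS.
    by rewrite subnKC // eqxx mulr1.
  move=> b hbb; rewrite (_ : (a + b == n)%N = false) ?mulr0 //.
  apply/negbTE; apply: contra hbb => /eqP e; apply/eqP/val_inj => /=.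
  by rewrite -e addKn.
rewrite big1 // => b _; rewrite (_ : (a + b == n)%N = false) ?mulr0 //.
by apply: gtn_eqF; apply: ltn_addr.
Qed.

End Pois.


Section Multi.
Variable R : realType.
Variable I : finType.

Definition wt (lam : I -> R) (g : I -> nat) := \prod_i poisson (lam i) (g i).
Definition Sb (lam : I -> R) (G : (I -> nat) -> R) K :=
  \sum_(J : {ffun I -> 'I_K}) wt lam (fun i => J i) * G (fun i => J i).

Lemma wt_ge0 lam g : (forall i, 0 <= lam i) -> 0 <= wt lam g.
Proof. by move=> h; apply: prodr_ge0 => i _; exact: poisson_ge0. Qed.

Lemma restrict (Phi : (I -> nat) -> R) K M : (K <= M)%N ->
  \sum_(J : {ffun I -> 'I_K}) Phi (fun i => J i) =
  \sum_(J : {ffun I -> 'I_M}) [forall i, (J i < K)%N]%:R * Phi (fun i => J i).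
Proof.
move=> KM.
pose h (J : {ffun I -> 'I_K}) : {ffun I -> 'I_M} := [ffun i => widen_ord KM (J i)].
have hinj : injective h.
  move=> J1 J2 e; apply/ffunP => i; have := congr1 (fun F : {ffun I -> 'I_M} => F i) e.
  rewrite !ffunE => /(congr1 val) /= e'; exact: val_inj.
have img : [set h J | J in [set: {ffun I -> 'I_K}]] = [set J : {ffun I -> 'I_M} | [forall i, (J i < K)%N]].
  apply/setP => J; rewrite inE; apply/imsetP/forallP.
    by case=> J' _ -> i; rewrite ffunE /=.
  move=> H; exists [ffun i => Ordinal (H i)]; first by rewrite inE.
  by apply/ffunP => i; rewrite !ffunE; apply: val_inj.
rewrite (eq_bigr (fun J : {ffun I -> 'I_M} => if [forall i, (J i < K)%N] then Phi (fun i => J i) else 0)); last first.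
  by move=> J _; case: ifP; rewrite ?mul1r ?mul0r.
rewrite -big_mkcond.
rewrite (eq_bigl (fun J => J \in [set J : {ffun I -> 'I_M} | [forall i, (J i < K)%N]])); last first.
  by move=> J; rewrite inE.
rewrite -img big_imset; last by move=> x y _ _; exact: hinj.
rewrite (eq_bigl xpredT); last by move=> J; rewrite inE.
by apply: eq_bigr => J _; congr Phi; apply/funext => i; rewrite ffunE.
Qed.

Lemma prod_bool (P : pred I) : \prod_i ((P i)%:R : R) = ([forall i, P i])%:R.
Proof.
case: (boolP [forall i, P i]) => [/forallP H | /forallPn [i Hi]].
  by apply: big1 => i _; rewrite H.
by rewrite (bigD1 i) //= (negbTE Hi) mul0r.
Qed.

Lemma conv (lam del : I -> R) G K :
  Sb (fun i => lam i + del i) G K =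
  \sum_(A : {ffun I -> 'I_K}) \sum_(B : {ffun I -> 'I_K})
    ([forall i, (A i + B i < K)%N]%:R *
     (wt lam (fun i => A i) * wt del (fun i => B i) * G (fun i => (A i + B i)%N))).
Proof.
rewrite /Sb.
have E (J : {ffun I -> 'I_K}) : wt (fun i => lam i + del i) (fun i => J i) =
   \sum_(A : {ffun I -> 'I_K}) \sum_(B : {ffun I -> 'I_K}) \prod_i
     (poisson (lam i) (A i) * poisson (del i) (B i) * ((A i + B i == J i)%N)%:R).
  rewrite /wt.
  under eq_bigr => i _ do rewrite (@pconvK R (lam i) (del i) _ _ (ltn_ord (J i))).
  rewrite bigA_distr_bigA; apply: eq_bigr => A _; by rewrite bigA_distr_bigA.
under eq_bigr => J _ do rewrite E mulr_suml.
rewrite exchange_big; apply: eq_bigr => A _.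
under eq_bigr => J _ do rewrite mulr_suml.
rewrite exchange_big; apply: eq_bigr => B _.
under eq_bigr => J _ do rewrite big_split /= big_split /= prod_bool.
case: (boolP [forall i, (A i + B i < K)%N]) => H.
  pose J0 : {ffun I -> 'I_K} := [ffun i => Ordinal (forallP H i)].
  rewrite (bigD1 J0) //= [X in _ + X]big1 ?addr0.
    have -> : [forall i, (A i + B i == J0 i)%N] by apply/forallP => i; rewrite ffunE.
    rewrite mul1r mulr1 /wt; congr (_ * G _).
    by apply/funext => i; rewrite ffunE.
  move=> J hJ; rewrite (_ : [forall i, (A i + B i == J i)%N] = false) ?mulr0 ?mul0r //.
  apply/negbTE; apply: contra hJ => /forallP H'; apply/eqP/ffunP => i.
  by apply: val_inj; rewrite ffunE /=; apply/esym/eqP; exact: H' i.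
rewrite mul0r; apply: big1 => J _.
rewrite (_ : [forall i, (A i + B i == J i)%N] = false) ?mulr0 ?mul0r //.
apply/negbTE/negP => /forallP H'; move/negP: H; apply; apply/forallP => i.
by rewrite (eqP (H' i)) ltn_ord.
Qed.


Lemma Sb_ge0 lam G K : (forall i, 0 <= lam i) -> (forall g, 0 <= G g) -> 0 <= Sb lam G K.
Proof. by move=> hl hG; apply: sumr_ge0 => J _; rewrite mulr_ge0 ?wt_ge0. Qed.

Lemma Sb_le lam G1 G2 K : (forall i, 0 <= lam i) -> (forall g, G1 g <= G2 g) ->
  Sb lam G1 K <= Sb lam G2 K.
Proof. by move=> hl hG; apply: ler_sum => J _; rewrite ler_wpM2l ?wt_ge0. Qed.

Lemma Sb1_prod lam K : Sb lam (fun _ => 1) K = \prod_i \sum_(k < K) poisson (lam i) k.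
Proof.
rewrite bigA_distr_bigA /Sb; apply: eq_bigr => J _; by rewrite mulr1.
Qed.

Lemma Sb1_ge0 lam K : (forall i, 0 <= lam i) -> 0 <= Sb lam (fun _ => 1) K.
Proof. by move=> hl; apply: Sb_ge0 => // g; exact: ler01. Qed.

Lemma prod01 (P : pred I) (F : I -> R) : (forall i, P i -> 0 <= F i <= 1) ->
  0 <= \prod_(i | P i) F i <= 1.
Proof.
move=> hF; apply: (big_ind (fun x : R => 0 <= x <= 1)) => //.
- by rewrite ler01 lexx.
- move=> x y /andP[x0 x1] /andP[y0 y1]; rewrite mulr_ge0 //=; exact: mulr_ile1.
Qed.

Lemma Sb1_le1 lam K : (forall i, 0 <= lam i) -> Sb lam (fun _ => 1) K <= 1.
Proof.
move=> hl; rewrite Sb1_prod.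
have /andP[] // : 0 <= \prod_i \sum_(k < K) poisson (lam i) k <= 1.
by apply: prod01 => i _; rewrite psum_ge0 ?psum_le1.
Qed.

Lemma cvg_prod_seq (r : seq I) (u : I -> nat -> R) :
  (forall i, (u i @ \oo --> (1 : R))%classic) ->
  ((fun K => \prod_(i <- r) u i K) @ \oo --> (1 : R))%classic.
Proof.
move=> hu; elim: r => [|a r IH].
  under eq_fun do rewrite big_nil; exact: cvg_cst.
under eq_fun do rewrite big_cons.
have H := cvgM (hu a) IH; rewrite mul1r in H; exact: H.
Qed.

Lemma Sb1_cvg lam : ((Sb lam (fun _ => 1)) @ \oo --> (1 : R))%classic.
Proof.
rewrite (_ : Sb lam (fun _ => 1) = fun K => \prod_i \sum_(k < K) poisson (lam i) k).
  apply: cvg_prod_seq => i; exact: psum_cvg.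
by apply/funext => K; rewrite Sb1_prod.
Qed.

Lemma mean_bound del K i0 : (forall i, 0 <= del i) ->
  Sb del (fun g => (g i0)%:R) K <= del i0.
Proof.
move=> hd.
have -> : Sb del (fun g => (g i0)%:R) K = \prod_i \sum_(k < K)
    (poisson (del i) k * (if i == i0 then (k : nat)%:R else 1)).
  rewrite bigA_distr_bigA /Sb; apply: eq_bigr => J _.
  rewrite big_split /=; congr (_ * _).
  rewrite -big_mkcond /= big_pred1_eq //.
rewrite (bigD1 i0) //= eqxx.
rewrite -[X in _ <= X]mulr1; apply: ler_pM.
- by apply: sumr_ge0 => k _; rewrite mulr_ge0 ?poisson_ge0.
- apply: prodr_ge0 => i /negbTE ->; apply: sumr_ge0 => k _.
  by rewrite mulr1 poisson_ge0.
- under eq_bigr do rewrite mulrC; exact: pmean.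
- have /andP[] // : 0 <= \prod_(i | i != i0) \sum_(k < K)
     (poisson (del i) k * (if i == i0 then (k : nat)%:R else 1)) <= 1.
  apply: prod01 => i /negbTE ->; under eq_bigr do rewrite mulr1.
  by rewrite psum_ge0 ?psum_le1.
Qed.


Lemma lin_bound del K (L : R) : (forall i, 0 <= del i) -> 0 <= L ->
  Sb del (fun g => L * \sum_i (g i)%:R) K <= L * \sum_i del i.
Proof.
move=> hd hL.
have -> : Sb del (fun g => L * \sum_i (g i)%:R) K =
   L * \sum_i Sb del (fun g => (g i)%:R) K.
  rewrite /Sb [in RHS]exchange_big /= [in RHS]mulr_sumr; apply: eq_bigr => J _.
  have -> : \sum_i wt del (fun i0 => J i0) * (J i : nat)%:R =
            wt del (fun i0 => J i0) * \sum_i (J i : nat)%:R by rewrite mulr_sumr.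
  ring.
by rewrite ler_wpM2l // ler_sum // => i _; exact: mean_bound.
Qed.

Lemma Sb_mono lam G K : (forall i, 0 <= lam i) -> (forall g, 0 <= G g) ->
  Sb lam G K <= Sb lam G K.+1.
Proof.
move=> hl hG.
rewrite /Sb (restrict (fun g => wt lam g * G g) _ _ (leqnSn K)).
apply: ler_sum => J _; case: [forall i, (J i < K)%N]; rewrite /= ?mul1r ?mul0r //.
by rewrite mulr_ge0 ?wt_ge0.
Qed.

Lemma double_split (K : nat) (a b x y : {ffun I -> 'I_K} -> R) :
  \sum_A \sum_B (a A * b B + x A * y B) =
  (\sum_A a A) * (\sum_B b B) + (\sum_A x A) * (\sum_B y B).
Proof.
under eq_bigr do rewrite big_split /=.
rewrite big_split /=; congr (_ + _); rewrite mulr_suml; apply: eq_bigr => A _;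
  by rewrite mulr_sumr.
Qed.

Section Hfun.
Variable h : (I -> nat) -> R.
Variable L : R.
Hypothesis hL : 0 <= L.
Hypothesis hpos : forall g, 0 <= h g.
Hypothesis h0 : h (fun _ => 0%N) = 0.
Hypothesis hmono : forall A B, h A <= h (fun i => (A i + B i)%N).
Hypothesis hlip : forall A B, h (fun i => (A i + B i)%N) <= h A + L * \sum_i (B i)%:R.

Lemma h_le g : h g <= L * \sum_i (g i)%:R.
Proof.
have := hlip (fun _ => 0%N) g; rewrite h0 add0r.
by rewrite (_ : (fun i => (0 + g i)%N) = g) //; apply/funext => i; rewrite add0n.
Qed.

Lemma ineq1 lam del K : (forall i, 0 <= lam i) -> (forall i, 0 <= del i) ->
  Sb (fun i => lam i + del i) h K <= Sb lam h K + L * \sum_i del i.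
Proof.
move=> hl hd; rewrite conv.
apply: (@le_trans _ _ (\sum_(A : {ffun I -> 'I_K}) \sum_(B : {ffun I -> 'I_K})
   (wt lam (fun i => A i) * h (fun i => A i) * (wt del (fun i => B i) * 1) +
    wt lam (fun i => A i) * 1 * (wt del (fun i => B i) * (L * \sum_i (B i : nat)%:R))))).
  apply: ler_sum => A _; apply: ler_sum => B _.
  set X := wt lam _ * wt del _ * h _.
  have X0 : 0 <= X by rewrite /X !mulr_ge0 ?wt_ge0.
  apply: (@le_trans _ _ X).
    by case: [forall i, (A i + B i < K)%N]; rewrite /= ?mul1r ?mul0r.
  rewrite /X; set a := wt lam _; set b := wt del _.
  have -> : a * h (fun i => A i) * (b * 1) + a * 1 * (b * (L * \sum_i (B i : nat)%:R)) =
            a * b * (h (fun i => A i) + L * \sum_i (B i : nat)%:R) by ring.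
  by rewrite ler_wpM2l ?mulr_ge0 ?wt_ge0 // hlip.
rewrite double_split.
change (Sb lam h K * Sb del (fun _ => 1) K + Sb lam (fun _ => 1) K *
  Sb del (fun g => L * \sum_i (g i)%:R) K <= Sb lam h K + L * \sum_i del i).
apply: lerD.
  rewrite -[X in _ <= X]mulr1; apply: ler_wpM2l; first exact: Sb_ge0.
  exact: Sb1_le1.
rewrite -[X in _ <= X]mul1r; apply: ler_pM.
- exact: Sb1_ge0.
- by apply: Sb_ge0 => // g; rewrite mulr_ge0 // sumr_ge0.
- exact: Sb1_le1.
- exact: lin_bound.
Qed.

Lemma ineq2 lam del K : (forall i, 0 <= lam i) -> (forall i, 0 <= del i) ->
  Sb lam h K * Sb del (fun _ => 1) K <= Sb (fun i => lam i + del i) h (K + K).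
Proof.
move=> hl hd; rewrite conv /Sb.
rewrite (restrict (fun g => wt lam g * h g) _ _ (leq_addr K K)).
rewrite (restrict (fun g => wt del g * 1) _ _ (leq_addr K K)).
rewrite mulr_suml; apply: ler_sum => A _; rewrite mulr_sumr; apply: ler_sum => B _.
case: (boolP [forall i, (A i < K)%N]) => HA; last first.
  by rewrite mulr0n mul0r mul0r mulr_ge0 // !mulr_ge0 ?wt_ge0.
case: (boolP [forall i, (B i < K)%N]) => HB; last first.
  by rewrite mulr0n mul0r mulr0 mulr_ge0 // !mulr_ge0 ?wt_ge0.
have -> : [forall i, (A i + B i < K + K)%N].
  apply/forallP => i; rewrite -addnS; apply: leq_add; [exact: ltnW (forallP HA i) | exact: (forallP HB i)].
rewrite !mulr1n !mul1r mulr1 mulrAC ler_wpM2l // mulr_ge0 ?wt_ge0 //.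
Qed.


Lemma Sbh_bound lam K : (forall i, 0 <= lam i) -> Sb lam h K <= L * \sum_i lam i.
Proof.
move=> hl; apply: le_trans (lin_bound lam K L hl hL).
by apply: Sb_le => // g; exact: h_le.
Qed.

Lemma Sbh_cvg lam : (forall i, 0 <= lam i) -> cvgn (Sb lam h).
Proof.
move=> hl; apply: nondecreasing_is_cvgn.
  by apply/nondecreasing_seqP => n; apply: Sb_mono.
by exists (L * \sum_i lam i) => _ [K _ <-]; exact: Sbh_bound.
Qed.

Definition sl lam := limn (Sb lam h).

Lemma sl_ge lam K : (forall i, 0 <= lam i) -> Sb lam h K <= sl lam.
Proof.
move=> hl; apply: nondecreasing_cvgn_le; last exact: Sbh_cvg.
by apply/nondecreasing_seqP => n; apply: Sb_mono.
Qed.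

Lemma sl_ineq1 lam del : (forall i, 0 <= lam i) -> (forall i, 0 <= del i) ->
  sl (fun i => lam i + del i) <= sl lam + L * \sum_i del i.
Proof.
move=> hl hd.
have hld : forall i, 0 <= lam i + del i by move=> i; rewrite addr_ge0.
apply: limr_le; first exact: Sbh_cvg.
apply: nearW => K; apply: le_trans (ineq1 _ _ K hl hd) _.
by rewrite lerD2r sl_ge.
Qed.

Lemma sl_ineq2 lam del : (forall i, 0 <= lam i) -> (forall i, 0 <= del i) ->
  sl lam <= sl (fun i => lam i + del i).
Proof.
move=> hl hd.
have hld : forall i, 0 <= lam i + del i by move=> i; rewrite addr_ge0.
have C : ((fun K => Sb lam h K * Sb del (fun _ => 1) K) @ \oo --> sl lam * 1)%classic.
  have H := cvgM (Sbh_cvg lam hl) (Sb1_cvg del); exact: H.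
rewrite -[sl lam]mulr1 -(cvg_lim _ C) //.
apply: limr_le; first exact: (cvgP _ C).
apply: nearW => K; apply: le_trans (ineq2 _ _ K hl hd) _.
exact: sl_ge.
Qed.


Lemma sl_lip lam1 lam2 : (forall i, 0 <= lam1 i) -> (forall i, 0 <= lam2 i) ->
  `|sl lam2 - sl lam1| <= L * \sum_i `|lam2 i - lam1 i|.
Proof.
move=> h1 h2.
pose nu i := if lam1 i <= lam2 i then lam1 i else lam2 i.
have hnu : forall i, 0 <= nu i by move=> i; rewrite /nu; case: ifP.
have hd1 : forall i, 0 <= lam1 i - nu i.
  move=> i; rewrite /nu subr_ge0; case: ifP => // /negbT; rewrite -ltNge; exact: ltW.
have hd2 : forall i, 0 <= lam2 i - nu i.
  move=> i; rewrite /nu subr_ge0; case: ifP => //.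
have b1 : forall i, lam1 i - nu i <= `|lam2 i - lam1 i|.
  move=> i; rewrite /nu; case: ifP => _; first by rewrite subrr normr_ge0.
  by rewrite distrC ler_norm.
have b2 : forall i, lam2 i - nu i <= `|lam2 i - lam1 i|.
  move=> i; rewrite /nu; case: ifP => _; last by rewrite subrr normr_ge0.
  exact: ler_norm.
have E1 : lam1 = (fun i => nu i + (lam1 i - nu i)).
  by apply/funext => i; rewrite addrC subrK.
have E2 : lam2 = (fun i => nu i + (lam2 i - nu i)).
  by apply/funext => i; rewrite addrC subrK.
have i1 := sl_ineq1 nu (fun i => lam1 i - nu i) hnu hd1.
have i2 := sl_ineq1 nu (fun i => lam2 i - nu i) hnu hd2.
have j1 := sl_ineq2 nu (fun i => lam1 i - nu i) hnu hd1.
have j2 := sl_ineq2 nu (fun i => lam2 i - nu i) hnu hd2.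
rewrite -E1 in i1 j1; rewrite -E2 in i2 j2.
have s1 : L * \sum_i (lam1 i - nu i) <= L * \sum_i `|lam2 i - lam1 i|.
  by rewrite ler_wpM2l // ler_sum.
have s2 : L * \sum_i (lam2 i - nu i) <= L * \sum_i `|lam2 i - lam1 i|.
  by rewrite ler_wpM2l // ler_sum.
rewrite ler_norml; move: i1 i2 j1 j2 s1 s2.
move: (sl lam1) (sl lam2) (sl nu) (L * \sum_i (lam1 i - nu i)) (L * \sum_i (lam2 i - nu i))
  (L * \sum_i `|lam2 i - lam1 i|) => a b c x y z *.
apply/andP; split; lra.
Qed.


Lemma Sb_decomp_lim lam F0 : (forall i, 0 <= lam i) ->
  limn (Sb lam (fun g => F0 - h g)) = F0 - sl lam.
Proof.
move=> hl.
have -> : Sb lam (fun g => F0 - h g) = fun K => F0 * Sb lam (fun _ => 1) K - Sb lam h K.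
  apply/funext => K; rewrite /Sb mulr_sumr -sumrB; apply: eq_bigr => J _; ring.
apply: cvg_lim => //.
have H := cvgB (cvgM (cvg_cst F0) (Sb1_cvg lam)) (Sbh_cvg lam hl).
rewrite mulr1 in H; exact: H.
Qed.

Lemma final_gen lam1 lam2 F0 : (forall i, 0 <= lam1 i) -> (forall i, 0 <= lam2 i) ->
  `|limn (Sb lam2 (fun g => F0 - h g)) - limn (Sb lam1 (fun g => F0 - h g))|
    <= L * \sum_i `|lam2 i - lam1 i|.
Proof.
move=> h1 h2; rewrite !Sb_decomp_lim //.
rewrite (_ : F0 - sl lam2 - (F0 - sl lam1) = - (sl lam2 - sl lam1)); last by ring.
rewrite normrN; exact: sl_lip.
Qed.

End Hfun.

End Multi.


Section Phys.
Variable R : realType.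
Variables q N : nat.
Hypothesis hq : (0 < q)%N.

Lemma Zpart_gt0 (J : 'M[R]_N) : 0 < Zpart q J.
Proof.
rewrite /Zpart (bigD1 [ffun _ => Ordinal hq]) //=.
by apply: ltr_wpDr; [apply: sumr_ge0 => s _; exact: expR_ge0 | exact: expR_gt0].
Qed.

Variable beta : R.
Hypothesis hb : 0 <= beta.

Lemma Ham_le (X Y : 'M[R]_N) (s : {ffun 'I_N -> 'I_q}) : (forall i j, X i j <= Y i j) ->
  Ham s (beta *: X) <= Ham s (beta *: Y) /\
  Ham s (beta *: Y) <= Ham s (beta *: X) + beta * \sum_i \sum_j (Y i j - X i j).
Proof.
move=> hXY; split.
  apply: ler_sum => i _; apply: ler_sum => j _; rewrite !mxE.
  by rewrite ler_wpM2r ?ler0n // ler_wpM2l.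
rewrite mulr_sumr -big_split; apply: ler_sum => i _.
rewrite mulr_sumr -big_split; apply: ler_sum => j _; rewrite !mxE.
have hd : 0 <= beta * (Y i j - X i j) by rewrite mulr_ge0 // subr_ge0.
case: (s i == s j); rewrite /= ?mulr1 ?mulr0 ?add0r //.
by rewrite -lerBlDl -mulrBr.
Qed.

Lemma lnZ_le (X Y : 'M[R]_N) : (forall i j, X i j <= Y i j) ->
  ln (Zpart q (beta *: Y)) <= ln (Zpart q (beta *: X)) /\
  ln (Zpart q (beta *: X)) <= ln (Zpart q (beta *: Y)) + beta * \sum_i \sum_j (Y i j - X i j).
Proof.
move=> hXY; set D := beta * _.
have pX := Zpart_gt0 (beta *: X); have pY := Zpart_gt0 (beta *: Y).
split.
  rewrite ler_ln ?posrE //; apply: ler_sum => s _; rewrite ler_expR lerN2.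
  by case: (Ham_le _ _ s hXY).
have : Zpart q (beta *: X) <= expR D * Zpart q (beta *: Y).
  rewrite /Zpart mulr_sumr; apply: ler_sum => s _; rewrite -expRD ler_expR.
  case: (Ham_le _ _ s hXY) => _ h2; rewrite /D; lra.
have pD : 0 < expR D * Zpart q (beta *: Y) by rewrite mulr_gt0 ?expR_gt0.
rewrite -ler_ln ?posrE // lnM ?posrE ?expR_gt0 // expRK.
by rewrite addrC.
Qed.

End Phys.


Theorem mainTheorem5 (R : realType) (q N : nat) (beta : R) :
  (2 <= q)%N -> 0 <= beta ->
  (forall c1 c2 : 'M[R]_N,
     (forall i j, 0 <= c1 i j) -> (forall i j, 0 <= c2 i j) ->
     `|pN q beta c2 - pN q beta c1|
       <= beta / (2 * (N ^ 2)%:R) * \sum_(i < N) \sum_(j < N) `|c2 i j - c1 i j|)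
  /\
  (forall c1 c2 : R, 0 <= c1 -> 0 <= c2 ->
     `|pN q beta (const_mx c2 : 'M[R]_N) - pN q beta (const_mx c1 : 'M[R]_N)|
       <= 2^-1 * beta * `|c2 - c1|).
Proof.
move=> hq hb.
have hq0 : (0 < q)%N by apply: ltnW.
pose L := N%:R^-1 * beta.
have hL : 0 <= L by rewrite mulr_ge0 // invr_ge0 ler0n.
pose f := fun J : 'M[R]_N => N%:R^-1 * ln (Zpart q (beta *: J)).
pose F := fun g : 'I_N * 'I_N -> nat => f (natmx g).
pose F0 := F (fun _ => 0%N).
pose h := fun g => F0 - F g.
have kF : forall A B : 'I_N * 'I_N -> nat,
    F (fun p => (A p + B p)%N) <= F A /\
    F A <= F (fun p => (A p + B p)%N) + L * \sum_p (B p)%:R.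
  move=> A B.
  have hXY : forall i j, natmx A i j <= natmx (fun p => (A p + B p)%N) i j :> R.
    by move=> i j; rewrite !mxE ler_nat leq_addr.
  have [l1 l2] := @lnZ_le R q N hq0 beta hb _ _ hXY.
  have ED : \sum_i \sum_j (natmx (fun p => (A p + B p)%N) i j - natmx A i j) =
            \sum_p (B p)%:R :> R.
    rewrite pair_bigA; apply: eq_bigr => -[i j] _ /=.
    by rewrite !mxE natrD addrAC subrr add0r.
  rewrite ED in l2.
  have hN : 0 <= N%:R^-1 :> R by rewrite invr_ge0 ler0n.
  split; first by rewrite /F /f ler_wpM2l.
  rewrite /F /f /L -mulrA -mulrDr ler_wpM2l //.
have E0 : forall g : 'I_N * 'I_N -> nat, (fun p => (0 + g p)%N) = g by move=> g; apply/funext => p.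
have hpos : forall g, 0 <= h g.
  by move=> g; rewrite /h subr_ge0; have [+ _] := kF (fun _ => 0%N) g; rewrite E0.
have h0 : h (fun _ => 0%N) = 0 by rewrite /h subrr.
have hmono : forall A B, h A <= h (fun i => (A i + B i)%N).
  by move=> A B; rewrite /h lerD2l lerN2; case: (kF A B).
have hlip : forall A B, h (fun i => (A i + B i)%N) <= h A + L * \sum_i (B i)%:R.
  move=> A B; rewrite /h; case: (kF A B) => _; lra.
pose lamc (c : 'M[R]_N) := fun p : 'I_N * 'I_N => c p.1 p.2 / (2 * N)%:R.
have EP : forall c, pN q beta c = limn (@Sb R _ (lamc c) (fun g => F0 - h g)).
  move=> c; rewrite /pN /EPois.
  suff -> : truncE c (fun J => N%:R^-1 * ln (Zpart q (beta *: J))) =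
            @Sb R _ (lamc c) (fun g => F0 - h g) by [].
  apply/funext => K; rewrite /truncE /Sb; apply: eq_bigr => J _.
  by rewrite /h opprB addrC subrK.
have lam0 : forall c : 'M[R]_N, (forall i j, 0 <= c i j) -> forall p, 0 <= lamc c p.
  by move=> c hc p; rewrite /lamc divr_ge0 ?ler0n.
have P1 : forall c1 c2 : 'M[R]_N,
     (forall i j, 0 <= c1 i j) -> (forall i j, 0 <= c2 i j) ->
     `|pN q beta c2 - pN q beta c1|
       <= beta / (2 * (N ^ 2)%:R) * \sum_(i < N) \sum_(j < N) `|c2 i j - c1 i j|.
  move=> c1 c2 h1 h2; rewrite !EP.
  apply: le_trans (@final_gen R _ h L hL hpos h0 hmono hlip _ _ F0 (lam0 _ h1) (lam0 _ h2)) _.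
  have E : \sum_p `|lamc c2 p - lamc c1 p| =
           (2 * N)%:R^-1 * \sum_i \sum_j `|c2 i j - c1 i j|.
    rewrite pair_bigA mulr_sumr; apply: eq_bigr => -[i j] _ /=.
    by rewrite /lamc -mulrBl normrM [`|_^-1|]ger0_norm ?invr_ge0 ?ler0n // mulrC.
  rewrite E /L natrM natrX expr2 !invfM le_eqVlt; apply/orP; left; apply/eqP; ring.
split => //.
move=> c1 c2 h1 h2.
have hc1 : forall i j, 0 <= (const_mx c1 : 'M[R]_N) i j by move=> i j; rewrite mxE.
have hc2 : forall i j, 0 <= (const_mx c2 : 'M[R]_N) i j by move=> i j; rewrite mxE.
apply: le_trans (P1 _ _ hc1 hc2) _.
rewrite (eq_bigr (fun _ => `|c2 - c1| *+ N)); last first.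
  move=> i _; rewrite (eq_bigr (fun _ => `|c2 - c1|)) ?sumr_const ?card_ord // => j _.
  by rewrite !mxE.
rewrite sumr_const card_ord.
have -> : `|c2 - c1| *+ N *+ N = `|c2 - c1| * N%:R * N%:R by rewrite !mulr_natr.
case: (posnP N) => [-> | hN].
  by rewrite !mulr0 mulr_ge0 // mulr_ge0 // invr_ge0.
have hN' : N%:R != 0 :> R by rewrite pnatr_eq0 -lt0n.
rewrite le_eqVlt; apply/orP; left; apply/eqP.
rewrite natrX; move: hN'; move: (N%:R : R) `|c2 - c1| => n d hn.
field.
by rewrite hn.
Qed.
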